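(* Let $\alpha\approx 2.956$ be Otter's tree constant. Fix $0<\varepsilon<\alpha$. There exist $\Delta=\Delta(\varepsilon)\in\mathbb N$ and $\rho=\rho(\varepsilon)>0$ such that, for all sufficiently large $n$, the number of pairwise non-isomorphic trees on $n$ vertices with maximum degree at most $\Delta$ and at least $\rho n$ leaves is at least $(\alpha-\varepsilon)^n$.
   Context: Otter's tree constant $\alpha$ is the constant such that the number of pairwise non-isomorphic unlabelled trees on $n$ vertices is $(1+o(1))Cn^{-5/2}\alpha^n$ for an absolute constant $C$; equivalently, the number $a_k$ of non-isomorphic rooted unlabelled trees on $k$ vertices satisfies $a_k=(1+o(1))C'k^{-3/2}\alpha^k$, so $a_k^{1/k}\to\alpha$. Trees are counted up to graph isomorphism (unlabelled). *)

(* Defs.v *)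
From HB Require Import structures.
From mathcomp Require Import all_boot all_order all_algebra all_fingroup.
From mathcomp Require Import all_classical all_reals all_analysis.
Set Implicit Arguments. Unset Strict Implicit. Unset Printing Implicit Defensive.
Import Order.TTheory GRing.Theory Num.Theory.

Definition graph (n : nat) := {ffun 'I_n * 'I_n -> bool}.

Definition adj n (G : graph n) : rel 'I_n := fun x y => G (x, y).

Definition simple_graph n (G : graph n) : bool :=
  [forall x, ~~ adj G x x] && [forall x, forall y, adj G x y == adj G y x].

Definition connected_graph n (G : graph n) : bool :=
  [forall x, forall y, connect (adj G) x y].

Definition acyclic_graph n (G : graph n) : Prop :=
  forall c : seq 'I_n, 2 < size c -> ~~ ucycleb (adj G) c.

Definition is_tree n (G : graph n) : bool :=
  [&& simple_graph G, connected_graph G & `[< acyclic_graph G >]].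

Definition deg n (G : graph n) (x : 'I_n) : nat := #|[set y | adj G x y]|.

Definition max_deg_le n (G : graph n) (D : nat) : bool := [forall x, deg G x <= D].

Definition nleaves n (G : graph n) : nat := #|[set x | deg G x == 1]|.

Definition isomorphic n (G H : graph n) : Prop :=
  exists s : {perm 'I_n}, forall x y, adj G x y = adj H (s x) (s y).

Definition rooted_isomorphic n (G H : graph n * 'I_n) : Prop :=
  exists s : {perm 'I_n}, s G.2 = H.2 /\
     forall x y, adj G.1 x y = adj H.1 (s x) (s y).

Definition num_unlabelled_trees n (P : graph n -> bool) : nat :=
  #|[set [set H : graph n | is_tree H && `[< isomorphic G H >]] |
       G in [set G : graph n | is_tree G && P G]]|.

Definition num_rooted_trees k : nat :=
  #|[set [set H : graph k * 'I_k | is_tree H.1 && `[< rooted_isomorphic G H >]] |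
       G in [set G : graph k * 'I_k | is_tree G.1]]|.

(* Main.v *)
Require Import Defs.
From HB Require Import structures.
From mathcomp Require Import all_boot all_order all_algebra all_fingroup.
From mathcomp Require Import all_classical all_reals all_analysis.
From mathcomp Require Import zify lra.
Import Order.TTheory GRing.Theory Num.Theory numFieldNormedType.Exports.
Set Implicit Arguments. Unset Strict Implicit. Unset Printing Implicit Defensive.
Local Open Scope nat_scope.

Lemma connect_proj (T T' : finType) (e : rel T) (e' : rel T') (A : pred T) (f : T -> T') :
  (forall p q, A p -> e p q -> A q && e' (f p) (f q)) ->
  forall x y, A x -> connect e x y -> A y && connect e' (f x) (f y).
Proof.
move=> H x y Ax /connectP [p pth ->]; elim: p x Ax pth => [|z p IH] x Ax /=.
  by rewrite Ax connect0.
case/andP=> exz pth; case/andP: (H _ _ Ax exz) => Az e'z.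
have /andP[-> c] := IH z Az pth.
by rewrite (connect_trans (connect1 e'z) c).
Qed.

Definition glue a b (G1 : graph a) (G2 : graph b) (u : 'I_a) (v : 'I_b) : graph (a + b) :=
  [ffun p : 'I_(a+b) * 'I_(a+b) => match fintype.split p.1, fintype.split p.2 with
   | inl x, inl y => G1 (x, y) | inr x, inr y => G2 (x, y)
   | inl x, inr y => (x == u) && (y == v) | inr x, inl y => (x == v) && (y == u) end].

Lemma split_l a b (x : 'I_a) : fintype.split (lshift b x) = inl x.
Proof. exact: (unsplitK (inl _ x)). Qed.
Lemma split_r a b (x : 'I_b) : fintype.split (rshift a x) = inr x.
Proof. exact: (unsplitK (inr _ x)). Qed.

Lemma splitLR a b (p : 'I_(a+b)) : {x | p = lshift b x} + {y | p = rshift a y}.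
Proof.
rewrite -(splitK p); case: (fintype.split p) => [x|y]; [left; exists x | right; exists y]; by [].
Qed.

Lemma simpleP n (G : graph n) : simple_graph G ->
  (forall x, adj G x x = false) /\ (forall x y, adj G x y = adj G y x).
Proof.
case/andP=> /forallP H1 /forallP H2; split=> [x|x y]; first by apply/negbTE.
by apply/eqP; have /forallP := H2 x; apply.
Qed.

Section Glue.
Variables (a b : nat) (G1 : graph a) (G2 : graph b) (u : 'I_a) (v : 'I_b).
Let G := glue G1 G2 u v.

Lemma adj_ll x y : adj G (lshift b x) (lshift b y) = adj G1 x y.
Proof. by rewrite /adj /G /glue ffunE /= !split_l. Qed.
Lemma adj_rr x y : adj G (rshift a x) (rshift a y) = adj G2 x y.
Proof. by rewrite /adj /G /glue ffunE /= !split_r. Qed.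
Lemma adj_lr x y : adj G (lshift b x) (rshift a y) = (x == u) && (y == v).
Proof. by rewrite /adj /G /glue ffunE /= split_l split_r. Qed.
Lemma adj_rl x y : adj G (rshift a x) (lshift b y) = (x == v) && (y == u).
Proof. by rewrite /adj /G /glue ffunE /= split_l split_r. Qed.


Definition isl (p : 'I_(a+b)) : bool := p < a.
Lemma isl_l x : isl (lshift b x). Proof. by rewrite /isl /= ltn_ord. Qed.
Lemma isl_r y : isl (rshift a y) = false.
Proof. by rewrite /isl /= ltnNge leq_addr. Qed.

Definition projl (p : 'I_(a+b)) : 'I_a :=
  match fintype.split p with inl x => x | inr _ => u end.
Definition projr (p : 'I_(a+b)) : 'I_b :=
  match fintype.split p with inl _ => v | inr y => y end.
Lemma projl_l x : projl (lshift b x) = x. Proof. by rewrite /projl split_l. Qed.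
Lemma projr_r y : projr (rshift a y) = y. Proof. by rewrite /projr split_r. Qed.

Hypotheses (T1 : is_tree G1) (T2 : is_tree G2).

Lemma tree_simple n (H : graph n) : is_tree H -> simple_graph H.
Proof. by case/and3P. Qed.
Lemma tree_conn n (H : graph n) : is_tree H -> forall x y, connect (adj H) x y.
Proof. by case/and3P=> _ /forallP H1 _ x y; have /forallP := H1 x; apply. Qed.
Lemma tree_acyc n (H : graph n) : is_tree H -> acyclic_graph H.
Proof. by case/and3P=> _ _ /asboolP. Qed.

Lemma glue_simple : simple_graph G.
Proof.
have [l1 s1] := simpleP (tree_simple T1); have [l2 s2] := simpleP (tree_simple T2).
apply/andP; split; apply/forallP => p.
  by case: (splitLR p) => [[x ->]|[y ->]]; rewrite ?adj_ll ?adj_rr ?l1 ?l2.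
apply/forallP => q; apply/eqP.
case: (splitLR p) => [[x ->]|[y ->]]; case: (splitLR q) => [[x' ->]|[y' ->]].
- by rewrite !adj_ll s1.
- by rewrite adj_lr adj_rl andbC.
- by rewrite adj_lr adj_rl andbC.
- by rewrite !adj_rr s2.
Qed.

Lemma glue_sym : symmetric (adj G).
Proof. by move=> x y; have [_ ->] := simpleP glue_simple. Qed.

Lemma conn_root p : connect (adj G) p (lshift b u).
Proof.
case: (splitLR p) => [[x ->]|[y ->]].
  have hl : forall p' q', predT p' -> adj G1 p' q' -> predT q' && adj G (lshift b p') (lshift b q').
    by move=> p' q' _ e; rewrite adj_ll e.
  by have /andP[_ ->] := @connect_proj _ _ _ _ predT _ hl x u isT (tree_conn T1 x u).
have hr : forall p' q', predT p' -> adj G2 p' q' -> predT q' && adj G (rshift a p') (rshift a q').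
  by move=> p' q' _ e; rewrite adj_rr e.
have /andP[_ c] := @connect_proj _ _ _ _ predT _ hr y v isT (tree_conn T2 y v).
by apply: (connect_trans c); apply: connect1; rewrite adj_rl !eqxx.
Qed.

Lemma glue_conn : connected_graph G.
Proof.
apply/forallP => p; apply/forallP => q.
apply: (connect_trans (conn_root p)).
by rewrite (sym_connect_sym glue_sym) conn_root.
Qed.

Lemma block_step p q : p != lshift b u -> q != lshift b u -> adj G p q -> isl p = isl q.
Proof.
case: (splitLR p) => [[x ->]|[y ->]]; case: (splitLR q) => [[x' ->]|[y' ->]];
  rewrite ?isl_l ?isl_r // ?adj_lr ?adj_rl ?eq_lshift.
  by move=> /negbTE -> .
by move=> _ /negbTE ->; rewrite andbF.
Qed.

Lemma path_avoid x p : path (adj G) x p -> lshift b u \notin x :: p ->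
  all (fun q => isl q == isl x) p.
Proof.
elim: p x => [|y p IH] x //= /andP[exy pth].
rewrite !inE negb_or => /andP[nx]; rewrite negb_or => /andP[ny np].
rewrite eq_sym in nx; rewrite eq_sym in ny.
have E := block_step nx ny exy.
rewrite E eqxx /=.
by have := IH y pth; rewrite inE negb_or eq_sym ny np => /(_ isT).
Qed.

Lemma mono_block c : path.cycle (adj G) c -> uniq c -> 2 < size c ->
  all isl c || all (fun q => ~~ isl q) c -> False.
Proof.
move=> cy uq sz /orP[] Hall.
  have Ec : c = map (lshift b) (map projl c).
    rewrite -map_comp map_id_in // => p /(allP Hall) /=.
    by case: (splitLR p) => [[x ->]|[y ->]]; rewrite ?projl_l ?isl_r.
  have uq1 : uniq (map projl c) by move: uq; rewrite {1}Ec (map_inj_uniq (@lshift_inj _ _)).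
  have cy1 : path.cycle (adj G1) (map projl c).
    move: cy; rewrite {1}Ec cycle_map (@eq_cycle _ _ (adj G1)) // => x y.
    by rewrite /relpre /= adj_ll.
  have := tree_acyc T1 (c := map projl c); rewrite size_map => /(_ sz).
  by rewrite /ucycleb cy1 uq1.
have Ec : c = map (@rshift a b) (map projr c).
  rewrite -map_comp map_id_in // => p /(allP Hall) /=.
  by case: (splitLR p) => [[x ->]|[y ->]]; rewrite ?projr_r ?isl_l.
have uq1 : uniq (map projr c) by move: uq; rewrite {1}Ec (map_inj_uniq (@rshift_inj _ _)).
have cy1 : path.cycle (adj G2) (map projr c).
  move: cy; rewrite {1}Ec cycle_map (@eq_cycle _ _ (adj G2)) // => x y.
  by rewrite /relpre /= adj_rr.
have := tree_acyc T2 (c := map projr c); rewrite size_map => /(_ sz).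
by rewrite /ucycleb cy1 uq1.
Qed.

Lemma glue_acyc : acyclic_graph G.
Proof.
move=> c sz; apply/negP => /andP[cy uq].
case: c sz cy uq => [//|x0 p] sz cy uq.
case Hin: (lshift b u \in x0 :: p).
- case: (rot_to Hin) => i p' Er.
  have cy' : path.cycle (adj G) (lshift b u :: p') by rewrite -Er rot_cycle.
  have uq' : uniq (lshift b u :: p') by rewrite -Er rot_uniq.
  have sz' : 2 < size (lshift b u :: p') by rewrite -Er size_rot.
  apply: (mono_block cy' uq' sz'); apply/orP; left.
  case: p' cy' uq' sz' {Er} => [//|y p1] cy' uq' sz'.
  case: p1 cy' uq' sz' => [//|w p2] cy' uq' sz'.
  move: cy' => /= /andP[e1] /andP[pth0]; rewrite rcons_path => /andP[pth1 elast].
  have pth : path (adj G) y (w :: p2) by rewrite /= pth0 pth1.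
  move: uq' => /andP[nu /andP[ny _]].
  have Hav := path_avoid pth nu.
  case Hy: (isl y).
    rewrite /= isl_l /=; move: Hav; rewrite Hy /= => /andP[/eqP -> /allP H] /=.
    by apply/allP => q qin; rewrite (eqP (H q qin)).
  exfalso.
  have zin : last y (w :: p2) \in w :: p2 by rewrite /= mem_last.
  have Hz : isl (last y (w :: p2)) = false by rewrite (eqP (allP Hav _ zin)) Hy.
  have elast' : adj G (last y (w :: p2)) (lshift b u) := elast.
  move: zin Hz elast'; set z := last y (w :: p2) => zin Hz elz.
  have Ey : y = rshift a v.
    case: (splitLR y) Hy e1 => [[y' ->]|[y' ->]]; first by rewrite isl_l.
    by move=> _; rewrite adj_lr => /andP[_ /eqP ->].
  have Ez : z = rshift a v.
    case: (splitLR z) Hz elz => [[y' ->]|[y' ->]]; first by rewrite isl_l.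
    by move=> _; rewrite adj_rl => /andP[/eqP -> _].
  by move: ny; rewrite Ey -Ez zin.
- have Hav : all (fun q => isl q == isl x0) (rcons p x0).
    apply: path_avoid cy _.
    have -> : (lshift b u \in x0 :: rcons p x0) = (lshift b u \in x0 :: p).
      by rewrite inE mem_rcons inE orbA orbb.
    by rewrite Hin.
  apply: (mono_block cy uq sz).
  move: Hav; rewrite all_rcons => /andP[_ Hav].
  case Hx: (isl x0); apply/orP; [left|right]; rewrite /= Hx /=;
    apply/allP => q qin; by rewrite (eqP (allP Hav q qin)) Hx.
Qed.

Lemma glue_tree : is_tree G.
Proof.
by rewrite /is_tree glue_simple glue_conn /=; apply/asboolP; exact: glue_acyc.
Qed.

End Glue.

Lemma card_split a b (P : pred 'I_(a+b)) :
  #|[set z | P z]| = #|[set x | P (lshift b x)]| + #|[set y | P (rshift a y)]|.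
Proof.
rewrite -!sum1_card big_mkcond big_split_ord /=.
by congr (_ + _); rewrite [RHS]big_mkcond; apply: eq_bigr => i _; rewrite !inE.
Qed.

Definition nlv n (H : graph n) (r : 'I_n) := #|[set x | (deg H x == 1) && (x != r)]|.

Lemma deg_le n (H : graph n) x : deg H x <= n.
Proof. by apply: leq_trans (max_card _) _; rewrite card_ord. Qed.

Lemma nlv_le n (H : graph n) r : nlv H r <= nleaves H.
Proof. by apply: subset_leq_card; apply/fintype.subsetP => x; rewrite !inE => /andP[]. Qed.

Section Glue2.
Variables (a b : nat) (G1 : graph a) (G2 : graph b) (u : 'I_a) (v : 'I_b).
Let G := glue G1 G2 u v.

Lemma deg_l x : deg G (lshift b x) = deg G1 x + (x == u).
Proof.
rewrite /deg (card_split (fun y => adj G (lshift b x) y)).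
congr (_ + _); first by apply: eq_card => y; rewrite !inE adj_ll.
case: eqP => [->|ne].
  rewrite /= -(cards1 v); apply: eq_card => y; rewrite !inE adj_lr eqxx.
  by [].
rewrite /= -(cards0 'I_b); apply: eq_card => y; rewrite !inE adj_lr.
by case: eqP.
Qed.

Lemma deg_r y : deg G (rshift a y) = deg G2 y + (y == v).
Proof.
rewrite /deg (card_split (fun z => adj G (rshift a y) z)) [RHS]addnC.
congr (_ + _); last by apply: eq_card => z; rewrite !inE adj_rr.
case: eqP => [->|ne].
  rewrite /= -(cards1 u); apply: eq_card => z; rewrite !inE adj_rl eqxx.
  by [].
rewrite /= -(cards0 'I_a); apply: eq_card => z; rewrite !inE adj_rl.
by case: eqP.
Qed.

Lemma nlv_glue : nlv G (lshift b u) = nlv G1 u + nlv G2 v + (deg G2 v == 0).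
Proof.
rewrite /nlv (card_split (fun z => (deg G z == 1) && (z != lshift b u))) -addnA.
congr (_ + _).
  apply: eq_card => x; rewrite !inE deg_l eq_lshift.
  by case: (x =P u) => [->|_]; rewrite /= ?andbF ?andbT ?addn0.
rewrite [in LHS](cardsD1 v) inE deg_r eqxx addn1 eqSS.
have -> : rshift a v != lshift b u.
  by apply/negP => /eqP E; have := isl_l b u; rewrite -E isl_r.
rewrite andbT [LHS]addnC; congr (_ + _); apply: eq_card => y; rewrite !inE deg_r.
case: (y =P v) => [->|_]; first by rewrite /= ?andbF.
rewrite /= addn0 andbT.
have -> : rshift a y != lshift b u.
  by apply/negP => /eqP E; have := isl_l b u; rewrite -E isl_r.
by rewrite andbT.
Qed.

End Glue2.

Definition crel n (H : graph n) (r : 'I_n) : rel 'I_n :=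
  fun p q => [&& adj H p q, p != r & q != r].

Definition comp n (H : graph n) (r x : 'I_n) : {set 'I_n} :=
  [set y | connect (crel H r) x y].

Lemma comp_map n m (H : graph n) (H' : graph m) (f : 'I_n -> 'I_m) r r' x y :
  (forall p q, adj H p q -> adj H' (f p) (f q)) ->
  (forall p, p != r -> f p != r') ->
  y \in comp H r x -> f y \in comp H' r' (f x).
Proof.
move=> hA hR; rewrite !inE => c.
have hh : forall p q, predT p -> crel H r p q -> predT q && crel H' r' (f p) (f q).
  by move=> p q _ /and3P[e1 e2 e3]; rewrite /crel hA // !hR.
by have /andP[_ ->] := connect_proj hh isT c.
Qed.

Lemma comp_iso_le n (H H' : graph n) (s : {perm 'I_n}) r x :
  (forall p q, adj H p q = adj H' (s p) (s q)) ->
  #|comp H r x| <= #|comp H' (s r) (s x)|.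
Proof.
move=> hs; rewrite -(card_imset _ (@perm_inj _ s)); apply: subset_leq_card.
apply/fintype.subsetP => _ /imsetP[y yin ->].
apply: comp_map yin; first by move=> p q; rewrite hs.
by move=> p; apply: contra => /eqP /perm_inj ->.
Qed.

Lemma comp_iso n (H H' : graph n) (s : {perm 'I_n}) r x :
  (forall p q, adj H p q = adj H' (s p) (s q)) ->
  #|comp H' (s r) (s x)| = #|comp H r x|.
Proof.
move=> hs; have h1 := comp_iso_le r x hs.
have h2 : #|comp H' (s r) (s x)| <= #|comp H r x|.
  have := @comp_iso_le n H' H s^-1%g (s r) (s x).
  by rewrite !permK; apply=> p q; rewrite hs !permKV.
by apply/eqP; rewrite eqn_leq h1 h2.
Qed.

Section Glue3.
Variables (a b : nat) (G1 : graph a) (G2 : graph b) (u : 'I_a) (v : 'I_b).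
Let G := glue G1 G2 u v.

Lemma comp_block x p : p \in comp G (lshift b u) x -> isl p = isl x.
Proof.
rewrite inE => c.
have hh : forall p q, (fun z => isl z == isl x) p -> crel G (lshift b u) p q ->
   (fun z => isl z == isl x) q && crel G (lshift b u) (id p) (id q).
  move=> p' q' /eqP E ee; have /and3P[e1 e2 e3] := ee; rewrite ee andbT -E.
  by rewrite (block_step e2 e3 e1).
by have /andP[/eqP -> _] := connect_proj hh (eqxx _) c.
Qed.

Lemma rshift_neq_l y : rshift a y != lshift b u.
Proof. by apply/negP => /eqP E; have := isl_l b u; rewrite -E isl_r. Qed.

Lemma comp_rr : is_tree G2 -> forall y z, rshift a z \in comp G (lshift b u) (rshift a y).
Proof.
move=> T2 y z.
have hh : forall p q, predT p -> adj G2 p q ->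
    predT q && crel G (lshift b u) (rshift a p) (rshift a q).
  by move=> p q _ e; rewrite /crel adj_rr e !rshift_neq_l.
by rewrite inE; have /andP[_ ->] := connect_proj hh isT (tree_conn T2 y z).
Qed.

Lemma comp_l_card x : #|comp G (lshift b u) (lshift b x)| <= a.
Proof.
apply: (leq_trans (n := #|(lshift b) @: [set: 'I_a]|)); last first.
  by rewrite card_imset ?cardsT ?card_ord //; exact: lshift_inj.
apply: subset_leq_card; apply/fintype.subsetP => p /comp_block; rewrite isl_l.
case: (splitLR p) => [[x' ->]|[y' ->]]; last by rewrite isl_r.
by move=> _; apply: imset_f; rewrite inE.
Qed.

Lemma comp_r_card : is_tree G2 -> b <= #|comp G (lshift b u) (rshift a v)|.
Proof.
move=> T2.
apply: (leq_trans (n := #|(@rshift a b) @: [set: 'I_b]|)).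
  by rewrite card_imset ?cardsT ?card_ord //; exact: rshift_inj.
apply: subset_leq_card; apply/fintype.subsetP => p /imsetP[z _ ->].
exact: comp_rr.
Qed.

End Glue3.

Lemma riso_refl n (G : graph n * 'I_n) : rooted_isomorphic G G.
Proof. by exists 1%g; split=> [|x y]; rewrite ?perm1. Qed.

Lemma riso_sym n (G H : graph n * 'I_n) : rooted_isomorphic G H -> rooted_isomorphic H G.
Proof.
case=> s [h1 h2]; exists s^-1%g; split; first by rewrite -h1 permK.
by move=> x y; rewrite h2 !permKV.
Qed.

Lemma riso_trans n (G H K : graph n * 'I_n) :
  rooted_isomorphic G H -> rooted_isomorphic H K -> rooted_isomorphic G K.
Proof.
case=> s [h1 h2] [t [t1 t2]]; exists (s * t)%g; split; first by rewrite permM h1.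
by move=> x y; rewrite h2 t2 !permM.
Qed.

Lemma glue_decode a b (G1 G1' : graph a) (G2 G2' : graph b) u u' v v'
  (s : {perm 'I_(a+b)}) :
  is_tree G2 -> is_tree G2' -> a < b ->
  s (lshift b u) = lshift b u' ->
  (forall p q, adj (glue G1 G2 u v) p q = adj (glue G1' G2' u' v') (s p) (s q)) ->
  rooted_isomorphic (G1, u) (G1', u') /\ rooted_isomorphic (G2, v) (G2', v').
Proof.
move=> T2 T2' ab hr hs.
set G := glue G1 G2 u v; set G' := glue G1' G2' u' v'.
have hv : s (rshift a v) = rshift a v'.
  have ea : adj G' (lshift b u') (s (rshift a v)) by rewrite -hr -hs adj_lr !eqxx.
  have cc := comp_iso (lshift b u) (rshift a v) hs; rewrite hr in cc.
  have := comp_r_card G1 u v T2; rewrite -cc.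
  move: ea; case: (splitLR (s (rshift a v))) => [[x ->]|[y ->]].
    by move=> _ le; have := leq_trans le (comp_l_card _ _ _ _ _); rewrite leqNgt ab.
  by rewrite adj_lr => /andP[_ /eqP ->].
have blk : forall z, isl (s (rshift a z)) = false.
  move=> z; have c := comp_rr G1 u v T2 v z.
  have h1 : forall p q, adj G p q -> adj G' (s p) (s q) by move=> p q; rewrite hs.
  have h2 : forall p, p != lshift b u -> s p != lshift b u'.
    by move=> p; rewrite -hr; apply: contra => /eqP /perm_inj ->.
  have c' := comp_map h1 h2 c; rewrite hv in c'.
  by have := comp_block c'; rewrite isl_r.
pose g2 z := projr v' (s (rshift a z)).
have Eg2 : forall z, s (rshift a z) = rshift a (g2 z).
  move=> z; have := blk z; rewrite /g2.
  by case: (splitLR (s (rshift a z))) => [[x ->]|[y ->]]; rewrite ?isl_l ?projr_r.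
have g2inj : injective g2.
  by move=> z1 z2 E; apply: (@rshift_inj a b); apply: (@perm_inj _ s); rewrite !Eg2 E.
have blkl : forall x, isl (s (lshift b x)).
  move=> x; case E: (s (lshift b x)) => [m Hm]; rewrite /isl /=.
  rewrite ltnNge; apply/negP => le.
  pose y := projr v' (Ordinal Hm).
  have Ey : Ordinal Hm = rshift a y.
    rewrite /y; case: (splitLR (Ordinal Hm)) => [[x' E']|[y' ->]]; last by rewrite projr_r.
    by exfalso; move: le; have /= -> := congr1 val E'; rewrite leqNgt ltn_ord.
  have := permKV (perm g2inj) y; rewrite permE => Ez.
  have := Eg2 ((perm g2inj)^-1 y)%g; rewrite Ez -Ey -E => /perm_inj Eq.
  by have := isl_l b x; rewrite -Eq isl_r.

pose g1 x := projl u' (s (lshift b x)).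
have Eg1 : forall x, s (lshift b x) = lshift b (g1 x).
  move=> x; have := blkl x; rewrite /g1.
  by case: (splitLR (s (lshift b x))) => [[x' ->]|[y ->]]; rewrite ?isl_r ?projl_l.
have g1inj : injective g1.
  by move=> z1 z2 E; apply: (@lshift_inj a b); apply: (@perm_inj _ s); rewrite !Eg1 E.
split.
  exists (perm g1inj); split; rewrite /= ?permE.
    by apply: (@lshift_inj a b); rewrite -Eg1.
  by move=> x y; rewrite !permE -(adj_ll G1 G2 u v) hs !Eg1 adj_ll.
exists (perm g2inj); split; rewrite /= ?permE.
  by apply: (@rshift_inj a b); rewrite -Eg2.
by move=> x y; rewrite !permE -(adj_rr G1 G2 u v) hs !Eg2 adj_rr.
Qed.

Definition single : graph 1 := [ffun _ => false].

Lemma adj_single x y : adj single x y = false.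
Proof. by rewrite /adj ffunE. Qed.

Lemma deg_single x : deg single x = 0.
Proof. by apply: eq_card0 => y; rewrite inE adj_single. Qed.

Lemma single_tree : is_tree single.
Proof.
apply/and3P; split.
- apply/andP; split; apply/forallP => x; rewrite ?adj_single //.
  by apply/forallP => y; rewrite !adj_single.
- apply/forallP => x; apply/forallP => y.
  by rewrite (ord1 x) (ord1 y) connect0.
- apply/asboolP => c sz; apply/negP => /andP[].
  by case: c sz => [//|x p] _; rewrite /= rcons_path; case: p => [|y p] /=;
     rewrite adj_single.
Qed.

Definition ext n (G : graph n * 'I_n) : graph (1 + n) * 'I_(1 + n) :=
  (glue single G.1 ord0 G.2, lshift n (ord0 : 'I_1)).

Lemma ext_prop n (G : graph n * 'I_n) :
  [&& is_tree G.1, [forall x, deg G.1 x <= 2] & deg G.1 G.2 <= 1] ->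
  [&& is_tree (ext G).1, [forall x, deg (ext G).1 x <= 2] & deg (ext G).1 (ext G).2 <= 1].
Proof.
case/and3P => t d r; apply/and3P; split.
- exact: glue_tree single_tree t.
- apply/forallP => x; case: (splitLR x) => [[x' ->]|[y ->]].
    by rewrite /= deg_l deg_single; case: eqP.
  rewrite /= deg_r; case: eqP => [->|_]; first by rewrite addn1 ltnS.
  by rewrite addn0 (forallP d).
- by rewrite /= deg_l deg_single eqxx.
Qed.

Fixpoint pathR (s : nat) : graph s.+1 * 'I_s.+1 :=
  match s with
  | 0 => (single, ord0)
  | s'.+1 => ext (pathR s')
  end.

Lemma pathR_prop s : [&& is_tree (pathR s).1, [forall x, deg (pathR s).1 x <= 2] &
   deg (pathR s).1 (pathR s).2 <= 1].
Proof.
elim: s => [|s IH].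
  apply/and3P; split; [exact: single_tree | apply/forallP => x | ]; by rewrite /= deg_single.
exact: ext_prop IH.
Qed.

Definition X1 : graph (1+1) := glue single single ord0 ord0.
Definition r1 : 'I_(1+1) := lshift 1 (ord0 : 'I_1).

Definition X2 k (T : graph k * 'I_k) : graph (1+1+k) := glue X1 T.1 r1 T.2.
Definition r2 k : 'I_(1+1+k) := lshift k r1.

Definition Lb k b (T : graph k * 'I_k) (P : graph b * 'I_b) :
  graph (1+1+k+b) * 'I_(1+1+k+b) :=
  (glue (X2 T) P.1 (r2 k) P.2, lshift b (r2 k)).

Lemma X1_tree : is_tree X1. Proof. exact: glue_tree single_tree single_tree. Qed.
Lemma X1_deg x : deg X1 x <= 1.
Proof.
case: (@splitLR 1 1 x) => [[x' ->]|[y ->]];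
  by rewrite ?deg_l ?deg_r deg_single; case: eqP.
Qed.
Lemma X1_nlv : 1 <= nlv X1 r1.
Proof. by rewrite /r1 /X1 nlv_glue deg_single eqxx addn1. Qed.

Section LbProps.
Variables (k b : nat) (T : graph k * 'I_k) (P : graph b * 'I_b).
Hypotheses (Tt : is_tree T.1) (Pt : is_tree P.1).

Lemma X2_tree : is_tree (X2 T). Proof. exact: glue_tree X1_tree Tt. Qed.

Lemma X2_deg x : deg (X2 T) x <= k.+2.
Proof.
case: (@splitLR (1+1) k x) => [[x' ->]|[y ->]].
  rewrite /X2 deg_l; apply: (@leq_trans 2) => //.
  by rewrite -[2]/(1+1); apply: leq_add; [exact: X1_deg | case: eqP].
rewrite /X2 deg_r -addn2; apply: leq_add; first exact: deg_le.
by case: eqP.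
Qed.

Lemma X2_root : deg (X2 T) (r2 k) = 2.
Proof.
rewrite /X2 /r2 deg_l eqxx /r1 /X1 deg_l deg_single eqxx.
by [].
Qed.

Lemma Lb_tree : is_tree (Lb T P).1.
Proof. exact: glue_tree X2_tree Pt. Qed.

Lemma Lb_root : deg (Lb T P).1 (Lb T P).2 = 3.
Proof. by rewrite /Lb /= deg_l X2_root eqxx. Qed.

Lemma Lb_deg D : 4 <= D -> k.+3 <= D -> (forall y, deg P.1 y <= D) -> deg P.1 P.2 <= 3 ->
  forall x, deg (Lb T P).1 x <= D.
Proof.
move=> h4 hk hP hr x; case: (@splitLR (1+1+k) b x) => [[x' ->]|[y ->]].
  rewrite /Lb /= deg_l; apply: leq_trans hk.
  by apply: leq_trans (leq_add (X2_deg x') (leq_b1 _)) _; rewrite addn1.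
rewrite /Lb /= deg_r; case: (y =P P.2) => [->|_]; last by rewrite addn0.
by rewrite addn1; apply: (leq_trans _ h4); rewrite ltnS.
Qed.

Lemma Lb_nlv : (nlv P.1 P.2).+1 <= nlv (Lb T P).1 (Lb T P).2.
Proof.
have h : 1 <= nlv (X2 T) (r2 k).
  rewrite /X2 /r2 nlv_glue; apply: leq_trans X1_nlv _; by rewrite -addnA leq_addr.
rewrite /Lb /= nlv_glue; apply: leq_trans (leq_addr _ _).
by rewrite -[(nlv _ _).+1]add1n; exact: leq_add h (leqnn _).
Qed.

End LbProps.

Lemma Lb_decode k b (T T' : graph k * 'I_k) (P P' : graph b * 'I_b) :
  is_tree T.1 -> is_tree T'.1 -> is_tree P.1 -> is_tree P'.1 -> 2 < k -> k.+2 < b ->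
  rooted_isomorphic (Lb T P) (Lb T' P') ->
  rooted_isomorphic T T' /\ rooted_isomorphic P P'.
Proof.
case: T => t rt; case: T' => t' rt'; case: P => p rp; case: P' => p' rp' /=.
move=> Tt Tt' Pt Pt' k2 kb [s [hr hs]].
have [h1 h2] := glue_decode Pt Pt' kb hr hs; split=> //.
case: h1 => s1 [hr1 hs1].
by have [_ h3] := glue_decode Tt Tt' k2 hr1 hs1.
Qed.

Definition rclass n (G : graph n * 'I_n) : {set graph n * 'I_n} :=
  [set H : graph n * 'I_n | is_tree H.1 && `[< rooted_isomorphic G H >]].

Lemma rclass_eq n (G H : graph n * 'I_n) : rooted_isomorphic G H -> rclass G = rclass H.
Proof.
move=> h; apply/setP => K; rewrite !inE; apply/idP/idP => /andP[-> /asboolP h'];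
  apply/asboolP; [exact: riso_trans (riso_sym h) h' | exact: riso_trans h h'].
Qed.

Lemma rclass_inv n (G H : graph n * 'I_n) : is_tree H.1 -> rclass G = rclass H ->
  rooted_isomorphic G H.
Proof.
move=> t E; have : H \in rclass H by rewrite inE t; apply/asboolP; exact: riso_refl.
by rewrite -E inE => /andP[_ /asboolP].
Qed.

Lemma pick_imset (T U : finType) (A : {set T}) (f : T -> U) c : c \in f @: A ->
  {G | [pick G in A | f G == c] = Some G /\ G \in A /\ f G = c}.
Proof.
case: pickP => [G /andP[GA /eqP E] | H] cin; first by exists G.
exfalso; case/imsetP: cin => G GA E; have := H G; by rewrite GA E eqxx.
Qed.

Definition TreesR k := [set T : graph k * 'I_k | is_tree T.1].

Fixpoint sz k s m := match m with 0 => s.+1 | m'.+1 => 1 + 1 + k + sz k s m' end.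

Fixpoint Good k s m : {set graph (sz k s m) * 'I_(sz k s m)} :=
  match m with
  | 0 => [set pathR s]
  | m'.+1 => [set Lb T P | T in TreesR k, P in Good k s m']
  end.

Lemma Good_prop k s m G : G \in Good k s m ->
  [&& is_tree G.1, [forall x, deg G.1 x <= k + 4], deg G.1 G.2 <= 3 & m <= nlv G.1 G.2].
Proof.
elim: m G => [|m IH] G /=.
  rewrite inE => /eqP ->; have /and3P[t d r] := pathR_prop s.
  rewrite t /= (leq_trans r) // andbT; apply/forallP => x.
  by apply: leq_trans (forallP d x) _; rewrite addn4.
case/imset2P => T P; rewrite inE => Tt Pin ->.
have /and4P[Pt Pd Pr Pn] := IH P Pin.
apply/and4P; split.
- exact: Lb_tree.
- apply/forallP; apply: Lb_deg => //; first by rewrite addn4.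
    by rewrite addn4.
  by move=> y; apply: (forallP Pd).
- by rewrite Lb_root.
- exact: leq_ltn_trans Pn (Lb_nlv _ _).
Qed.

Definition RC k s m := [set rclass G | G in Good k s m].
Definition TK k := [set rclass G | G in TreesR k].

Lemma TK_card k : num_rooted_trees k = #|TK k|.
Proof. by []. Qed.

Lemma sz_ge k s m : s.+1 <= sz k s m.
Proof. by elim: m => //= m IH; apply: leq_trans IH (leq_addl _ _). Qed.

Lemma RC_step k s m : 2 < k -> k.+2 < s.+1 -> #|TK k| * #|RC k s m| <= #|RC k s m.+1|.
Proof.
move=> k2 ks.
have kb : k.+2 < sz k s m by apply: leq_trans ks (sz_ge _ _ _).
pose F (cd : {set graph k * 'I_k} * {set graph (sz k s m) * 'I_(sz k s m)}) :
    {set graph (sz k s m.+1) * 'I_(sz k s m.+1)} :=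
  match [pick G in TreesR k | rclass G == cd.1], [pick G in Good k s m | rclass G == cd.2] with
  | Some T, Some P => rclass (Lb T P)
  | _, _ => finset.set0
  end.
rewrite -cardsX -(@card_in_imset _ _ F).
  apply: subset_leq_card; apply/fintype.subsetP => _ /imsetP[[c d] /setXP[cin din] ->].
  have [T [eT [TA Tc]]] := pick_imset cin; have [P [eP [PA Pc]]] := pick_imset din.
  rewrite /F /= eT eP; apply: imset_f; exact: imset2_f.
move=> [c d] [c' d'] /setXP[cin din] /setXP[cin' din'].
have [T [eT [TA Tc]]] := pick_imset cin; have [P [eP [PA Pc]]] := pick_imset din.
have [T' [eT' [TA' Tc']]] := pick_imset cin'; have [P' [eP' [PA' Pc']]] := pick_imset din'.
rewrite /F /= eT eP eT' eP' => E.
have t' : is_tree (Lb T' P').1.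
  by apply: Lb_tree; [move: TA'; rewrite inE | have /andP[] := Good_prop PA'].
have a1 : is_tree T.1 by move: TA; rewrite inE.
have a2 : is_tree T'.1 by move: TA'; rewrite inE.
have a3 : is_tree P.1 by have /andP[] := Good_prop PA.
have a4 : is_tree P'.1 by have /andP[] := Good_prop PA'.
have [h1 h2] := Lb_decode a1 a2 a3 a4 k2 kb (rclass_inv t' E).
by rewrite -Tc -Pc -Tc' -Pc' (rclass_eq h1) (rclass_eq h2).
Qed.

Lemma RC_bound k s m : 2 < k -> k.+2 < s.+1 -> #|TK k| ^ m <= #|RC k s m|.
Proof.
move=> k2 ks; elim: m => [|m IH].
  by rewrite expn0 /RC /= imset_set1 cards1.
by rewrite expnS; apply: leq_trans (RC_step _ k2 ks); rewrite leq_mul2l IH orbT.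
Qed.

Definition uclass n (G : graph n) : {set graph n} :=
  [set H : graph n | is_tree H && `[< isomorphic G H >]].

Lemma NU_card n (Pn : graph n -> bool) :
  num_unlabelled_trees Pn = #|[set uclass G | G in [set G : graph n | is_tree G && Pn G]]|.
Proof. by []. Qed.

Lemma RC_to_U n (S : {set graph n * 'I_n}) (Pn : graph n -> bool) :
  (forall G, G \in S -> is_tree G.1 && Pn G.1) ->
  #|[set rclass G | G in S]| <= num_unlabelled_trees Pn * n.+1.
Proof.
move=> hS; rewrite NU_card.
set UC := [set uclass G | G in _].
pose repU (U : {set graph n}) : graph n := odflt [ffun _ => false] [pick H in U].
have keyS : forall G, G \in S -> exists r, [pick r | `[< rooted_isomorphic G (repU (uclass G.1), r) >]] = Some r /\
     rooted_isomorphic G (repU (uclass G.1), r).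
  move=> G GS; have /andP[Gt _] := hS G GS.
  have Gin : G.1 \in uclass G.1.
    by rewrite inE Gt; apply/asboolP; exists 1%g => x y; rewrite !perm1.
  have [H eH] : {H | [pick H in uclass G.1] = Some H}.
    by case: pickP => [H _|H]; [exists H | have := H G.1; rewrite Gin].
  have : H \in uclass G.1 by move: eH; case: pickP => // H' h [<-].
  rewrite inE => /andP[_ /asboolP [sg hsg]].
  have hr : rooted_isomorphic G (repU (uclass G.1), sg G.2).
    by exists sg; split=> //; rewrite /repU eH.
  case: pickP => [r /asboolP hr'|H0]; first by exists r.
  by exfalso; have := H0 (sg G.2); move/asboolP: hr => ->.
pose Phi (d : {set graph n * 'I_n}) : {set graph n} * option 'I_n :=
  match [pick G in S | rclass G == d] with
  | Some G => (uclass G.1, [pick r | `[< rooted_isomorphic G (repU (uclass G.1), r) >]])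
  | None => (finset.set0, None)
  end.
have -> : #|UC| * n.+1 = #|finset.setX UC [set: option 'I_n]|.
  by rewrite cardsX cardsT card_option card_ord.
rewrite -(@card_in_imset _ _ Phi).
  apply: subset_leq_card; apply/fintype.subsetP => _ /imsetP[d din ->].
  have [G [eG [GS Gd]]] := pick_imset din.
  rewrite /Phi eG inE finset.in_setT andbT /UC; apply: imset_f; rewrite inE.
  exact: hS.
move=> d d' din din'.
have [G [eG [GS Gd]]] := pick_imset din; have [G' [eG' [GS' Gd']]] := pick_imset din'.
rewrite /Phi eG eG'.
have [r [er hr]] := keyS G GS; have [r' [er' hr']] := keyS G' GS'.
rewrite er er' => -[EU Er]; rewrite -Er -EU in hr'.
rewrite -Gd -Gd'; apply: rclass_eq; exact: riso_trans hr (riso_sym hr').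
Qed.

Lemma szE k s m : sz k s m = s.+1 + m * k.+2.
Proof.
elim: m => [|m IH] /=; first by rewrite mul0n addn0.
rewrite IH mulSn; lia.
Qed.

Lemma count_sz (R : realType) k s m (rho : R) n : 2 < k -> k.+2 < s.+1 -> n = sz k s m ->
  (rho * n%:R <= m%:R)%R ->
  num_rooted_trees k ^ m <= num_unlabelled_trees (fun G : graph n =>
     max_deg_le G (k+4) && (rho * n%:R <= (nleaves G)%:R)%R) * n.+1.
Proof.
move=> k2 ks -> hr.
apply: leq_trans (RC_bound m k2 ks) _.
apply: RC_to_U => G /Good_prop /and4P[t d r l].
rewrite t /= /max_deg_le d /=; apply: (le_trans hr).
by rewrite ler_nat; apply: leq_trans l (nlv_le _ _).
Qed.

Lemma count_main (R : realType) k n (rho : R) : 2 < k -> k.*2 + 5 <= n ->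
  (rho * n%:R <= ((n - k.+3) %/ k.+2)%:R)%R ->
  num_rooted_trees k ^ ((n - k.+3) %/ k.+2) <= num_unlabelled_trees (fun G : graph n =>
     max_deg_le G (k+4) && (rho * n%:R <= (nleaves G)%:R)%R) * n.+1.
Proof.
move=> k2 hn hr; set m := (n - k.+3) %/ k.+2.
have hm : m * k.+2 <= n - k.+3 by exact: leq_trunc_div.
apply: (@count_sz R k (n - 1 - m * k.+2) m rho n k2) => //.
  rewrite ltnS; have : k.+3 <= n by apply: leq_trans hn; rewrite -addnn; lia.
  by move=> h; lia.
rewrite szE; have : k.+3 <= n by apply: leq_trans hn; rewrite -addnn; lia.
by move=> h; lia.
Qed.

Lemma bern (R : realType) (d : R) k : (0 <= d -> 1 + k%:R * d <= (1 + d) ^+ k)%R.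
Proof.
move=> d0; elim: k => [|k IH]; first by rewrite mul0r addr0 expr0.
rewrite exprS -natr1.
have k0 : (0 <= k%:R :> R)%R by [].
have : (0 <= k%:R * (d * d) :> R)%R by rewrite mulr_ge0 // mulr_ge0.
have : ((1 + d) * (1 + k%:R * d) <= (1 + d) * (1 + d) ^+ k)%R.
  by rewrite ler_wpM2l // addr_ge0.
nra.
Qed.

Lemma powR_root (R : realType) (A : R) k : (0 <= A)%R -> (0 < k)%N -> ((A `^ (k%:R^-1)) ^+ k = A)%R.
Proof.
move=> A0 k0; rewrite -powR_mulrn ?powR_ge0 // -powRrM mulVf ?powRr1 //.
by rewrite pnatr_eq0 -lt0n.
Qed.

Lemma nat_facts k M0 n : (M0.+1 * k.+2 + k.*2 + 5 <= n)%N ->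
  let m := ((n - k.+3) %/ k.+2)%N in
  [/\ (M0.+1 <= m)%N, (k.*2 + 5 <= n)%N, (n <= 3 * k.+2 * m)%N,
      (n - m * k.+2 <= k.*2 + 5)%N & (n.+1 <= (k.*2 + 5) * m.+1)%N /\
      (n = (n - m * k.+2) + m * k.+2)%N].
Proof.
move=> hn m.
have hmM : (M0.+1 <= m)%N.
  rewrite /m leq_divRL //; move: hn; move: (M0.+1 * k.+2)%N => P hn; lia.
have hdiv := divn_eq (n - k.+3) k.+2.
have hmod := @ltn_pmod (n - k.+3) k.+2 isT.
rewrite -/m in hdiv.
have ht1 : (k.+2 <= m * k.+2)%N by rewrite leq_pmull //; lia.
have ht2 : (m * k.+2 <= (k.*2 + 5) * m)%N by rewrite mulnC leq_mul2r; apply/orP; right; lia.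
have hnk : (k.*2 + 5 <= n)%N by move: hn; move: (M0.+1 * k.+2)%N => P hn; lia.
have e1 : ((k.*2 + 5) * m.+1 = (k.*2 + 5) + (k.*2 + 5) * m)%N by rewrite mulnS.
have e2 : (3 * k.+2 * m = 3 * (m * k.+2))%N by rewrite mulnAC mulnA.
rewrite e1 e2.
move: hdiv hmod ht1 ht2; move: ((n - k.+3) %% k.+2)%N => r.
move: (m * k.+2)%N (((k.*2 + 5) * m))%N => t u hdiv hmod ht1 ht2.
split => //; try split; lia.
Qed.

Local Open Scope classical_set_scope.
Local Open Scope ring_scope.

Unset Implicit Arguments.
Theorem lemma2p3 (R : realType) (alpha : R)
  (Halpha : (fun k : nat => ((num_rooted_trees k)%:R : R) `^ (k%:R^-1)) @ \oo --> alpha)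
  (eps : R) (Heps0 : 0 < eps) (Heps : eps < alpha) :
  exists (Delta : nat) (rho : R), 0 < rho /\
    \forall n \near \oo,
      (alpha - eps) ^+ n <=
      (num_unlabelled_trees (fun G : graph n =>
          max_deg_le G Delta && (rho * n%:R <= (nleaves G)%:R)))%:R.
Proof.
set q := alpha - eps.
have hq : 0 < q by rewrite subr_gt0.
pose b := alpha - eps / 2.
have hqb : q < b by rewrite /q /b; lra.
have hba : b < alpha by rewrite /b; lra.
have hb0 : 0 < b by rewrite /b; lra.
pose d := b / q - 1.
have hd : 0 < d by rewrite /d subr_gt0 ltr_pdivlMr // mul1r.
have E1 := cvgr_gt _ Halpha _ hba.
case: E1 => N1 _ H1.
case: (nbhs_infty_ger (4 * q ^+ 2 / d)) => N3 _ H3.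
have [k [k1 k3 k2]] : exists k, [/\ (N1 <= k)%N, (N3 <= k)%N & (2 < k)%N].
  by exists (N1 + N3 + 3)%N; split; lia.
have hA : b < (num_rooted_trees k)%:R `^ (k%:R^-1) := H1 k k1.
have hK : 4 * q ^+ 2 / d <= k%:R := H3 k k3.
set A : R := (num_rooted_trees k)%:R in hA *.
have A0 : 0 <= A by rewrite /A.
have hAb : b ^+ k <= A.
  rewrite -(powR_root A0 (_ : (0 < k)%N)); last by lia.
  apply: (lerXn2r k); rewrite ?nnegrE ?powR_ge0 //; [exact: ltW | exact: ltW].
have hbr : b = (1 + d) * q.
  by rewrite /d addrC subrK divfK // gt_eqF.
have e1 : 4 * q ^+ 2 <= (1 + d) ^+ k.
  apply: le_trans (bern _ (ltW hd)).
  move: hK; rewrite ler_pdivrMr // => hK; lra.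
have e2 : 0 <= q ^+ k by rewrite exprn_ge0 // ltW.
have h4 : 4 * q ^+ k.+2 <= A.
  apply: le_trans hAb; rewrite hbr exprMn.
  have -> : q ^+ k.+2 = q ^+ k * q ^+ 2 by rewrite -exprD addn2.
  by rewrite [q ^+ k * _]mulrC mulrA ler_pM2r // exprn_gt0.
pose M := Num.max 1 q.
have M1 : 1 <= M by rewrite /M le_max lexx.
have qM : q <= M by rewrite /M le_max lexx orbT.
pose C := M ^+ (k.*2 + 5) * (k.*2 + 5)%:R.
case: (nbhs_infty_ger C) => M0 _ HM.
pose rho : R := ((3 * k.+2)%:R)^-1.
exists (k + 4)%N, rho; split; first by rewrite /rho invr_gt0 ltr0n.
exists (M0.+1 * k.+2 + k.*2 + 5)%N => // n /= hn.
set m := ((n - k.+3) %/ k.+2)%N.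
have [hmM hnk hn1 hn2 [hn3 hn4]] := nat_facts hn; rewrite -/m in hmM hn1 hn2 hn3 hn4.
have hrho : rho * n%:R <= m%:R.
  by rewrite /rho ler_pdivrMl ?ltr0n // -natrM ler_nat.
have hc := count_main k2 hnk hrho.
have hcR : A ^+ m <= (num_unlabelled_trees (fun G : graph n =>
     max_deg_le G (k+4) && (rho * n%:R <= (nleaves G)%:R)))%:R * n.+1%:R.
  by rewrite /A -natrX -natrM ler_nat.
suff key : q ^+ n * n.+1%:R <= A ^+ m.
  by rewrite -(ler_pM2r (_ : 0 < n.+1%:R :> R)) ?ltr0n //; apply: le_trans key hcR.
have s1 : A ^+ m >= 4 ^+ m * q ^+ (m * k.+2).
  rewrite mulnC exprM -exprMn; apply: lerXn2r; rewrite ?nnegrE //.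
  by rewrite mulr_ge0 // exprn_ge0 // ltW.
have s2 : q ^+ (n - m * k.+2) <= M ^+ (k.*2 + 5).
  apply: le_trans (_ : M ^+ (n - m * k.+2) <= _).
    have M0' : 0 <= M by exact: le_trans (ltW hq) qM.
    by apply: lerXn2r; rewrite ?nnegrE // ltW.
  exact: ler_weXn2l.
have s3 : n.+1%:R <= (k.*2 + 5)%:R * m.+1%:R :> R by rewrite -natrM ler_nat.
have s4 : C <= m%:R by apply: HM; exact: ltnW hmM.
have s5 : m.+1%:R ^+ 2 <= 4 ^+ m :> R.
  have : (m.+1 <= 2 ^ m)%N by apply: ltn_expl.
  rewrite -(ler_nat R) natrX => h.
  have -> : (4 : R) ^+ m = (2 ^+ m) ^+ 2 by rewrite -exprM mulnC exprM expr2 -natrM.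
  by apply: lerXn2r; rewrite ?nnegrE.
rewrite {1}hn4 exprD mulrAC.
have t0 : 0 <= q ^+ (m * k.+2) by rewrite exprn_ge0 // ltW.
have t1 : 0 <= q ^+ (n - m * k.+2) by rewrite exprn_ge0 // ltW.
apply: le_trans s1; apply: ler_wpM2r => //.
apply: le_trans (ler_pM t1 (ler0n _ _) s2 s3) _.
rewrite mulrA; move: s4 s5; rewrite /C -natr1.
move: (M ^+ (k.*2 + 5) * (k.*2 + 5)%:R) => ZK.
have t3 : 0 <= m%:R :> R by [].
move: (m%:R : R) t3 => W t3 s4 s5.
nra.
Qed.
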